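(* Consider the randomized instance described in the context. For any $\delta\in(0,1)$, $\Delta\in(0,m)$ and $\gamma\in(0,0.5]$ satisfying $2\sqrt{\log(2/\delta)\cdot m}\le\frac m2$ and $\frac{4(\Delta+1)}{m}\le\frac12$, under the choice $\epsilon=\frac{2(\Delta+1)}{m-2\sqrt{\log(2/\delta)\cdot m}}$, it holds with probability at least $1-\delta$ (over $X_1,\dots,X_m$) that $\mathrm{OptEnvy}\le-\Delta$.
   Context: Two agents $a,b$, $m$ items ($m$ a multiple of 4), additive utilities. An allocation is a partition $(\mathcal{A}_a,\mathcal{A}_b)$ of $[m]$; $\mathrm{Envy}_{a\to b}=\sum_{i\in\mathcal{A}_b}\mu^a_i-\sum_{i\in\mathcal{A}_a}\mu^a_i$, $\mathrm{Envy}_{b\to a}=\sum_{i\in\mathcal{A}_a}\mu^b_i-\sum_{i\in\mathcal{A}_b}\mu^b_i$, $\mathrm{Envy}=\max$ of the two, $\mathrm{OptEnvy}=\min$ of $\mathrm{Envy}$ over all allocations. Randomized instance: $X_1,\dots,X_m$ i.i.d. $\mathrm{Bernoulli}(1/2)$; for $i\le m/2$: if $X_i=1$ then $\mu^a_i=\frac12+\epsilon,\mu^b_i=\frac12-\epsilon$, if $X_i=0$ then $\mu^a_i=\frac12-\epsilon,\mu^b_i=\frac12+\epsilon$; for $i>m/2$: if $X_i=1$ then $\mu^a_i=\mu^b_i=\frac12+\gamma$, if $X_i=0$ then $\mu^a_i=\mu^b_i=\frac12-\gamma$. $\log$ is natural. *)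

(* Defs.v *)
From HB Require Import structures.
From mathcomp Require Import all_boot all_order all_algebra.
From mathcomp Require Import all_classical all_reals all_analysis.
Set Implicit Arguments. Unset Strict Implicit. Unset Printing Implicit Defensive.
Import Order.TTheory GRing.Theory Num.Theory.
Local Open Scope ring_scope.

(* Items are indexed by 'I_m (0-based): paper's item i (1-based) is (i-1).
   Paper's "i <= m/2" becomes (val i < m %/ 2). *)

Definition mu_a (R : realType) (m : nat) (eps gam : R) (X : {ffun 'I_m -> bool})
  (i : 'I_m) : R :=
  if (val i < m %/ 2)%N then (if X i then 1/2 + eps else 1/2 - eps)
  else (if X i then 1/2 + gam else 1/2 - gam).

Definition mu_b (R : realType) (m : nat) (eps gam : R) (X : {ffun 'I_m -> bool})
  (i : 'I_m) : R :=
  if (val i < m %/ 2)%N then (if X i then 1/2 - eps else 1/2 + eps)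
  else (if X i then 1/2 + gam else 1/2 - gam).

(* An allocation is given by the bundle A of agent a; agent b gets ~: A. *)
Definition envy_ab (R : realType) (m : nat) (eps gam : R) (X : {ffun 'I_m -> bool})
  (A : {set 'I_m}) : R :=
  \sum_(i in ~: A) mu_a eps gam X i - \sum_(i in A) mu_a eps gam X i.

Definition envy_ba (R : realType) (m : nat) (eps gam : R) (X : {ffun 'I_m -> bool})
  (A : {set 'I_m}) : R :=
  \sum_(i in A) mu_b eps gam X i - \sum_(i in ~: A) mu_b eps gam X i.

Definition envy (R : realType) (m : nat) (eps gam : R) (X : {ffun 'I_m -> bool})
  (A : {set 'I_m}) : R :=
  Num.max (envy_ab eps gam X A) (envy_ba eps gam X A).

Definition opt_envy (R : realType) (m : nat) (eps gam : R) (X : {ffun 'I_m -> bool}) : R :=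
  \big[Num.min/envy eps gam X (finset.set0)]_(A : {set 'I_m}) envy eps gam X A.

(* Probability of an event over X_1..X_m i.i.d. Bernoulli(1/2), i.e. the
   uniform distribution on {ffun 'I_m -> bool}. *)
Definition prob_unif (R : realType) (m : nat) (E : pred {ffun 'I_m -> bool}) : R :=
  (#|[set X | E X]|)%:R / (2 ^ m)%:R.

(* Main.v *)
Require Import Defs.
From HB Require Import structures.
From mathcomp Require Import all_boot all_order all_algebra.
From mathcomp Require Import all_classical all_reals all_analysis.
From mathcomp Require Import ring lra zify.
Import Order.TTheory GRing.Theory Num.Theory.
Local Open Scope ring_scope.
Section C.
Variable R : realType.

Lemma fact_double j : (2 ^ j * j`! <= (j.*2)`!)%N.
Proof.
elim: j => [//|j IH].
rewrite doubleS !factS expnS.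
move: IH; move: (2 ^ j)%N (j`!)%N ((j.*2)`!)%N => A B C IH.
rewrite -mul2n.
have h1 : (2 * A * (j.+1 * B) = (2 * j.+1) * (A * B))%N by nia.
rewrite h1; apply: leq_mul; first by lia.
apply: leq_trans IH _; rewrite leq_pmull //.
Qed.

Lemma cosh_le (x : R) : expR x + expR (- x) <= 2 * expR (x ^+ 2 / 2).
Proof.
pose a n := exp_coeff x n + exp_coeff (- x) n.
pose b n := exp_coeff (x ^+ 2 / 2) n.
have a0 n : 0 <= a n.
  rewrite /a /exp_coeff /= -mulrDl divr_ge0 // exprNn.
  case: (boolP (odd n)) => on.
    by rewrite -signr_odd on expr1 mulN1r subrr.
  by rewrite -signr_odd (negbTE on) expr0 mul1r -mulr2n mulrn_wge0 // exprn_even_ge0.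
have aodd j : a (j.*2.+1) = 0.
  by rewrite /a /exp_coeff /= exprNn -signr_odd oddS odd_double /= expr1 mulN1r mulNr addrN.
have aev j : a (j.*2) <= 2 * b j.
  rewrite /a /b /exp_coeff /= exprNn -signr_odd odd_double /= expr0 mul1r.
  rewrite -mulrDl -mulr2n -[_ *+ 2]mulr_natl -mulrA ?mulr1 ler_wpM2l //.
  rewrite exprMn -exprM mul2n exprVn.
  rewrite -mulrA ler_wpM2l ?exprn_even_ge0 ?odd_double //.
  rewrite -invfM ?lef_pV2 ?posrE ?mulr_gt0 ?exprn_gt0 ?ltr0n ?fact_gt0 //.
  by rewrite -natrX -natrM ler_nat fact_double.
have P J : \sum_(0 <= n < J.*2) a n <= 2 * \sum_(0 <= j < J) b j.
  elim: J => [|J IH]; first by rewrite !big_geq // mulr0.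
  rewrite doubleS !big_nat_recr //= aodd addr0 mulrDr lerD //.
have Q N : \sum_(0 <= n < N) a n <= 2 * \sum_(0 <= j < N) b j.
  apply: le_trans (P N).
  rewrite (@big_cat_nat _ _ _ N 0 N.*2) //=; last by rewrite -addnn leq_addr.
  by rewrite lerDl sumr_ge0.
have cx := is_cvg_series_exp_coeff x.
have cnx := is_cvg_series_exp_coeff (- x).
have cb := is_cvg_series_exp_coeff (x ^+ 2 / 2).
rewrite /expR -limD //.
apply: limr_le; first exact: is_cvgD.
near=> N => /=.
rewrite -seriesD /series /=.
apply: le_trans (Q N) _.
rewrite ler_wpM2l //.
apply: nondecreasing_cvgn_le => //.
apply/nondecreasing_seqP => n; rewrite /series /= big_nat_recr //= lerDl.
exact: exp_coeff_ge0 (divr_ge0 (sqr_ge0 _) _).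
Unshelve. all: by end_near.
Qed.
End C.
Section C2.
Variable R : realType.
Variables m n : nat.
Hypothesis nm : (n <= m)%N.

Definition sg (b : bool) : R := if b then 1 else -1.
Definition SS (X : {ffun 'I_m -> bool}) : R := \sum_(i < m | (i < n)%N) sg (X i).

Hypothesis cosh_le : forall x : R, expR x + expR (- x) <= 2 * expR (x ^+ 2 / 2).

Lemma mgf (lam : R) :
  \sum_(X : {ffun 'I_m -> bool}) expR (lam * SS X) <= (2 ^ m)%:R * expR (n%:R * (lam ^+ 2 / 2)).
Proof.
pose g (i : 'I_m) (b : bool) := if (i < n)%N then expR (lam * sg b) else 1.
have E X : expR (lam * SS X) = \prod_(i < m) g i (X i).
  rewrite /SS mulr_sumr expR_sum [RHS](bigID (fun i : 'I_m => (i < n)%N)) /=.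
  rewrite [X in _ * X]big1 ?mulr1; last by move=> i /negbTE hi; rewrite /g hi.
  by apply: eq_bigr => i hi; rewrite /g hi.
rewrite (eq_bigr _ (fun X _ => E X)) -bigA_distr_bigA /=.
have B : forall i : 'I_m, \sum_(b : bool) g i b <= 2 * (if (i < n)%N then expR (lam ^+ 2 / 2) else 1).
  move=> i; rewrite big_bool /g; case: ifP => _.
    by rewrite /sg mulr1 mulrN1; apply: cosh_le.
  by rewrite mulr1.
have H := @ler_prod _ _ (index_enum 'I_m) xpredT (fun i => \sum_b g i b) (fun i => 2 * (if (i < n)%N then expR (lam ^+ 2 / 2) else 1)).
apply: le_trans (H _) _.
  move=> i _; apply/andP; split; last exact: B.
  by apply: sumr_ge0 => b _; rewrite /g; case: ifP => // _; apply: expR_ge0.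
rewrite big_split /= prodr_const card_ord natrX ler_wpM2l ?exprn_ge0 //.
rewrite -big_mkcond /= -(big_ord_widen _ (fun _ => expR (lam ^+ 2 / 2)) nm).
by rewrite prodr_const card_ord -expRM_natl.
Qed.

Lemma bad_count (s lam : R) : 0 <= lam ->
  #|[set X : {ffun 'I_m -> bool} | s < `|SS X|]|%:R * expR (lam * s)
   <= 2 * ((2 ^ m)%:R * expR (n%:R * (lam ^+ 2 / 2))).
Proof.
move=> l0.
rewrite mulr_natl -sumr_const big_mkcond /=.
apply: le_trans (_ : \sum_(X : {ffun 'I_m -> bool}) (expR (lam * SS X) + expR ((- lam) * SS X)) <= _).
  apply: ler_sum => X _; rewrite inE.
  case: ifP => h; last by rewrite addr_ge0 ?expR_ge0.
  have [S0|S0] := leP 0 (SS X).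
    move: h; rewrite ger0_norm // => h.
    by rewrite ler_wpDr ?expR_ge0 // ler_expR ler_wpM2l // ltW.
  move: h; rewrite ltr0_norm // => h.
  by rewrite ler_wpDl ?expR_ge0 // ler_expR mulNr -mulrN ler_wpM2l // ltW.
rewrite big_split /= mulr2n mulrDl mul1r lerD ?mgf //.
by have := mgf (- lam); rewrite sqrrN.
Qed.
End C2.
Lemma subset_card (T : finType) (A : {set T}) k : (k <= #|A|)%N ->
  exists B : {set T}, B \subset A /\ #|B| = k.
Proof.
elim: k => [|k IH] hk; first by exists finset.set0; rewrite finset.sub0set cards0.
have [B [BA cB]] := IH (ltnW hk).
have : (0 < #|A :\: B|)%N by rewrite cardsD (finset.setIidPr BA) cB subn_gt0.
case/card_gt0P => x; rewrite inE => /andP[xB xA].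
exists (x |: B); split; first by rewrite finset.subUset finset.sub1set xA BA.
by rewrite cardsU1 xB cB.
Qed.

Section G.
Variable R : realType.
Lemma greedy (T : finType) (c : T -> R) (H : {set T}) :
  (forall i, i \in H -> 0 <= c i <= 1) ->
  exists C : {set T}, C \subset H /\ `|\sum_(i in H) c i - 2 * \sum_(i in C) c i| <= 1.
Proof.
move: {2}#|H| (leqnn #|H|) => N; elim: N H => [|N IH] H hN hc.
  move: hN; rewrite leqn0 cards_eq0 => /eqP ->.
  by exists finset.set0; rewrite finset.sub0set !big_set0 mulr0 subrr normr0 ler01.
have [H0|[x xH]] := set_0Vmem H.
  by exists finset.set0; rewrite H0 finset.sub0set !big_set0 mulr0 subrr normr0 ler01.
have hN' : (#|H :\ x| <= N)%N by move: hN; rewrite (cardsD1 x H) xH add1n ltnS.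
have hc' : forall i, i \in H :\ x -> 0 <= c i <= 1.
  by move=> i; rewrite inE => /andP[_]; apply: hc.
have [C [CH hC]] := IH _ hN' hc'.
have /andP[c0 c1] := hc x xH.
have xC : x \notin C by apply/negP => /(fintype.subsetP CH); rewrite !inE eqxx.
have SH : \sum_(i in H) c i = c x + \sum_(i in H :\ x) c i.
  by rewrite (bigD1 x xH) /=; congr (_ + _); apply: eq_bigl => i; rewrite !inE andbC.
set D := \sum_(i in H :\ x) c i - 2 * \sum_(i in C) c i.
have [D0|D0] := leP 0 D.
  exists (x |: C); split.
    rewrite finset.subUset finset.sub1set xH; apply: fintype.subset_trans CH _; exact: finset.subD1set.
  rewrite big_setU1 //= SH.
  have -> : c x + \sum_(i in H :\ x) c i - 2 * (c x + \sum_(i in C) c i) = D - c x by rewrite /D; ring.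
  move: hC; rewrite -/D => hC.
  rewrite ler_norml; apply/andP; split; rewrite ger0_norm in hC => //; lra.
exists C; split; first by apply: fintype.subset_trans CH _; exact: finset.subD1set.
rewrite SH.
have -> : c x + \sum_(i in H :\ x) c i - 2 * \sum_(i in C) c i = D + c x by rewrite /D; ring.
move: hC; rewrite -/D ltr0_norm // => hC.
rewrite ler_norml; apply/andP; split; lra.
Qed.
End G.
Section D.
Variable R : realType.
Variables (m q : nat) (eps gam Delta : R) (X : {ffun 'I_m -> bool}).
Let n := (m %/ 2)%N.
Let Fp := [set i : 'I_m | (i < n)%N && X i].
Let Fm := [set i : 'I_m | (i < n)%N && ~~ X i].
Let H := [set i : 'I_m | ~~ (i < n)%N].

Lemma opt_le (A : {set 'I_m}) : opt_envy eps gam X <= envy eps gam X A.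
Proof.
rewrite /opt_envy.
have : A \in index_enum {set 'I_m} by rewrite mem_index_enum.
elim: (index_enum _) => [//|B r IH]; rewrite big_cons inE => /orP[/eqP <-|Ar].
  by rewrite ge_min lexx.
by rewrite ge_min IH ?orbT.
Qed.

Lemma split3 (f : 'I_m -> R) (A : {set 'I_m}) : \sum_(i in A) f i =
  \sum_(i in A :&: Fp) f i + \sum_(i in A :&: Fm) f i + \sum_(i in A :&: H) f i.
Proof.
rewrite [LHS](bigID (fun i : 'I_m => (i < n)%N)) /=.
rewrite [X in X + _ = _](bigID (fun i : 'I_m => X i)) /=.
congr (_ + _ + _); apply: eq_bigl => i; rewrite !inE.
- by case: (i \in A); case: (i < n)%N; case: (X i).
- by case: (i \in A); case: (i < n)%N; case: (X i).
- by case: (i \in A); case: (i < n)%N; case: (X i).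
Qed.

Lemma cardFpm : (#|Fp| + #|Fm| = n)%N.
Proof.
have nm : (n <= m)%N by rewrite /n leq_div.
have -> : Fp = [set i : 'I_m | (i < n)%N] :&: [set i : 'I_m | X i].
  by apply/setP => i; rewrite !inE.
have -> : Fm = [set i : 'I_m | (i < n)%N] :\: [set i : 'I_m | X i].
  by apply/setP => i; rewrite !inE andbC.
rewrite cardsID -sum1_card.
rewrite (eq_bigl (fun i : 'I_m => (i < n)%N)); last by move=> i; rewrite inE.
by rewrite -(big_ord_widen _ (fun _ => 1%N) nm) sum1_card card_ord.
Qed.

Lemma det : (n = q.*2)%N -> 0 < eps -> 0 < gam <= 1/2 ->
  Delta + 1 <= (n%:R - `|#|Fp|%:R - #|Fm|%:R|) * eps -> opt_envy eps gam X <= - Delta.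
Proof.
move=> hnq e0 /andP[g0 g1] hD.
have kk := cardFpm.
move: hD; set k := #|Fp|; set k' := #|Fm| => hD.
set p := minn k q.
have [Bp [BpF cBp]] := @subset_card _ Fp p (geq_minl _ _).
have [Bm [BmF cBm]] : exists B : {set 'I_m}, B \subset Fm /\ #|B| = (q - p)%N.
  apply: subset_card; rewrite -/k'; rewrite /p; lia.
have hc : forall i, i \in H -> 0 <= mu_a eps gam X i <= 1.
  move=> i; rewrite inE /mu_a => /negbTE ->; case: (X i); apply/andP; split; lra.
have [C [CH hCD]] := @greedy R _ _ _ hc.
pose A := Bp :|: Bm :|: C.
have memA : forall i, i \in A = [|| i \in Bp, i \in Bm | i \in C].
  by move=> i; rewrite !inE orbA.
have AFp : A :&: Fp = Bp.
  apply/setP => i; rewrite inE memA.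
  move: (fintype.subsetP BpF i) (fintype.subsetP BmF i) (fintype.subsetP CH i); rewrite !inE.
  case: (i \in Bp); case: (i \in Bm); case: (i \in C); case: (i < n)%N; case: (X i) => //=;
   move=> h1 h2 h3; (try by have := h1 isT); (try by have := h2 isT); (try by have := h3 isT).
have AFm : A :&: Fm = Bm.
  apply/setP => i; rewrite inE memA.
  move: (fintype.subsetP BpF i) (fintype.subsetP BmF i) (fintype.subsetP CH i); rewrite !inE.
  case: (i \in Bp); case: (i \in Bm); case: (i \in C); case: (i < n)%N; case: (X i) => //=;
   move=> h1 h2 h3; (try by have := h1 isT); (try by have := h2 isT); (try by have := h3 isT).
have AH : A :&: H = C.
  apply/setP => i; rewrite inE memA.
  move: (fintype.subsetP BpF i) (fintype.subsetP BmF i) (fintype.subsetP CH i); rewrite !inE.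
  case: (i \in Bp); case: (i \in Bm); case: (i \in C); case: (i < n)%N; case: (X i) => //=;
   move=> h1 h2 h3; (try by have := h1 isT); (try by have := h2 isT); (try by have := h3 isT).
have compl (f : 'I_m -> R) : \sum_(i in ~: A) f i = \sum_(i in [set: 'I_m]) f i - \sum_(i in A) f i.
  rewrite (bigID (fun i : 'I_m => i \in A) (fun i => i \in [set: 'I_m])) /=.
  rewrite (_ : \sum_(i in [set: 'I_m] | i \in A) f i = \sum_(i in A) f i); last by apply: eq_bigl => i; rewrite !inE.
  rewrite addrC addrK; apply: eq_bigl => i; rewrite !inE //.
have all3 (f : 'I_m -> R) : \sum_(i in [set: 'I_m]) f i =
    \sum_(i in Fp) f i + \sum_(i in Fm) f i + \sum_(i in H) f i.
  by rewrite (split3 f [set: _]) !finset.setTI.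
have A3 (f : 'I_m -> R) : \sum_(i in A) f i = \sum_(i in Bp) f i + \sum_(i in Bm) f i + \sum_(i in C) f i.
  by rewrite (split3 f A) AFp AFm AH.
have cst (B : {set 'I_m}) (f : 'I_m -> R) c : (forall i, i \in B -> f i = c) ->
    \sum_(i in B) f i = #|B|%:R * c.
  by move=> h; rewrite (eq_bigr (fun _ => c)) // sumr_const mulr_natl.
have aFp (B : {set 'I_m}) : B \subset Fp -> \sum_(i in B) mu_a eps gam X i = #|B|%:R * (1/2 + eps).
  move=> BF; apply: (cst B) => i /(fintype.subsetP BF); rewrite inE /mu_a => /andP[-> ->] //.
have aFm (B : {set 'I_m}) : B \subset Fm -> \sum_(i in B) mu_a eps gam X i = #|B|%:R * (1/2 - eps).
  move=> BF; apply: (cst B) => i /(fintype.subsetP BF); rewrite inE /mu_a => /andP[-> /negbTE ->] //.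
have bFp (B : {set 'I_m}) : B \subset Fp -> \sum_(i in B) mu_b eps gam X i = #|B|%:R * (1/2 - eps).
  move=> BF; apply: (cst B) => i /(fintype.subsetP BF); rewrite inE /mu_b => /andP[-> ->] //.
have bFm (B : {set 'I_m}) : B \subset Fm -> \sum_(i in B) mu_b eps gam X i = #|B|%:R * (1/2 + eps).
  move=> BF; apply: (cst B) => i /(fintype.subsetP BF); rewrite inE /mu_b => /andP[-> /negbTE ->] //.
have abH (B : {set 'I_m}) : B \subset H -> \sum_(i in B) mu_b eps gam X i = \sum_(i in B) mu_a eps gam X i.
  move=> BF; apply: eq_bigr => i /(fintype.subsetP BF); rewrite inE /mu_a /mu_b => /negbTE -> //.
apply: le_trans (opt_le A) _.
rewrite /envy ge_max /envy_ab /envy_ba !compl !all3 !A3.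
rewrite (aFp _ BpF) (aFm _ BmF) (bFp _ BpF) (bFm _ BmF) (abH _ CH) (abH _ (fintype.subxx H)).
rewrite (aFp _ (fintype.subxx _)) (aFm _ (fintype.subxx _)) (bFp _ (fintype.subxx _)) (bFm _ (fintype.subxx _)).
rewrite cBp cBm -/k -/k'.
move: hCD; set T := \sum_(i in H) _; set S := \sum_(i in C) _ => hCD.
have hq : (p <= q)%N by rewrite geq_minr.
rewrite natrB //.
have kkR : k%:R + k'%:R = 2 * q%:R :> R by rewrite -natrD kk hnq -mul2n natrM.
move: hD; rewrite -/n hnq -mul2n natrM -kkR => hD.
have [hkq|hkq] := leqP k q.
  have pk : p = k by rewrite /p; lia.
  have kk' : (k <= k')%N by lia.
  move: hD; rewrite pk ler0_norm ?subr_le0 ?ler_nat // => hD.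
  move: hCD; rewrite ler_norml => /andP[h1 h2].
  apply/andP; split; nra.
have pk : p = q by rewrite /p; lia.
have kk' : (k' <= k)%N by lia.
move: hD; rewrite pk ger0_norm ?subr_ge0 ?ler_nat // => hD.
move: hCD; rewrite ler_norml => /andP[h1 h2].
apply/andP; split; nra.
Qed.
End D.

Lemma SS_card (R : realType) m (X : {ffun 'I_m -> bool}) :
  @SS R m (m %/ 2) X = #|[set i : 'I_m | (i < m %/ 2)%N && X i]|%:R
                    - #|[set i : 'I_m | (i < m %/ 2)%N && ~~ X i]|%:R.
Proof.
rewrite /SS (bigID (fun i : 'I_m => X i)) /=.
congr (_ + _).
  rewrite (eq_bigr (fun _ => 1)); last by move=> i /andP[_ ->].
  rewrite sumr_const; congr (_ *+ _); apply: eq_card => i; rewrite !inE //.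
rewrite (eq_bigr (fun _ => -1)); last by move=> i /andP[_ /negbTE ->].
rewrite sumr_const -mulNrn; congr (_ *+ _); apply: eq_card => i; rewrite !inE //.
Qed.

Theorem lemma22 (R : realType) (m : nat) (delta Delta gam : R) :
  (4 %| m)%N ->
  0 < delta < 1 ->
  0 < Delta < m%:R ->
  0 < gam <= 1/2 ->
  2 * Num.sqrt (ln (2 / delta) * m%:R) <= m%:R / 2 ->
  4 * (Delta + 1) / m%:R <= 1/2 ->
  let eps := 2 * (Delta + 1) / (m%:R - 2 * Num.sqrt (ln (2 / delta) * m%:R)) in
  1 - delta <= prob_unif R (fun X : {ffun 'I_m -> bool} => opt_envy eps gam X <= - Delta).
Proof.
move=> m4 /andP[d0 d1] /andP[D0 Dm] hg hs _; cbv zeta.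
set eps := 2 * (Delta + 1) / _.
set L := ln (2 / delta).
set s := Num.sqrt (L * m%:R).
have m0 : (0 < m)%N by rewrite lt0n; apply/negP => /eqP m0; move: Dm; rewrite m0; lra.
have mR0 : 0 < m%:R :> R by rewrite ltr0n.
have [q mq] : exists q, m = (q * 4)%N by exists (m %/ 4)%N; rewrite divnK.
pose n := (m %/ 2)%N.
have nq : n = q.*2 by rewrite /n mq (_ : (q * 4 = q.*2 * 2)%N) ?mulnK //; lia.
have nm : (n <= m)%N by rewrite /n leq_div.
have nR : n%:R = m%:R / 2 :> R by rewrite nq mq -muln2 !natrM; field.
have n0 : 0 < n%:R :> R by rewrite nR; lra.
have L0 : 0 < L.
  rewrite /L; apply: ln_gt0; rewrite ltr_pdivlMr // mul1r.
  by apply: lt_trans d1 _; rewrite ltr1n.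
have s0 : 0 <= s by apply: sqrtr_ge0.
have s2 : s ^+ 2 = L * m%:R by rewrite /s sqr_sqrtr // mulr_ge0 // ltW.
have hs' : 2 * s <= m%:R / 2 by exact: hs.
have den0 : 0 < m%:R - 2 * s by lra.
have epsE : eps = 2 * (Delta + 1) / (m%:R - 2 * s) by [].
have e0 : 0 < eps by rewrite epsE divr_gt0 // mulr_gt0 //; lra.
have good : forall X : {ffun 'I_m -> bool}, `|@SS R m n X| <= s -> opt_envy eps gam X <= - Delta.
  move=> X hX; apply: (@det R m q eps gam Delta X nq e0 hg).
  move: hX; rewrite /n SS_card => hX.
  rewrite -/n nR.
  have h1 : m%:R / 2 - s <= m%:R / 2 - `|#|[set i : 'I_m | (i < m %/ 2)%N && X i]|%:R -
        #|[set i : 'I_m | (i < m %/ 2)%N && ~~ X i]|%:R| :> R by lra.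
  apply: le_trans (ler_wpM2r (ltW e0) h1).
  rewrite epsE.
  have -> : (m%:R / 2 - s) * (2 * (Delta + 1) / (m%:R - 2 * s)) = Delta + 1.
    field; lra.
  by [].
set lam := s / n%:R.
have lam0 : 0 <= lam by rewrite divr_ge0 // ltW.
have hb := @bad_count R m n nm (@cosh_le R) s lam lam0.
set B := #|[set X : {ffun 'I_m -> bool} | s < `|@SS R m n X|]| in hb.
have key : n%:R * (lam ^+ 2 / 2) - lam * s = - L.
  have -> : n%:R * (lam ^+ 2 / 2) - lam * s = - (s ^+ 2) / (2 * n%:R).
    rewrite /lam; field; lra.
  rewrite s2 nR; field; lra.
have Bb : B%:R <= delta * (2 ^ m)%:R :> R.
  have : B%:R <= 2 * (2 ^ m)%:R * expR (n%:R * (lam ^+ 2 / 2) - lam * s).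
    rewrite expRB !mulrA ler_pdivlMr ?expR_gt0 //; move: hb; rewrite !mulrA //.
  rewrite key expRN /L lnK; last by rewrite posrE divr_gt0.
  rewrite invf_div.
  have -> : 2 * (2 ^ m)%:R * (delta / 2) = delta * (2 ^ m)%:R :> R by field.
  by [].
set G := #|[set X : {ffun 'I_m -> bool} | opt_envy eps gam X <= - Delta]|.
have GB : (2 ^ m <= G + B)%N.
  have := cardsC [set X : {ffun 'I_m -> bool} | s < `|@SS R m n X|].
  rewrite card_ffun card_bool card_ord => <-.
  rewrite -/B addnC leq_add2r.
  apply: subset_leq_card; apply/fintype.subsetP => X; rewrite !inE -leNgt.
  exact: good.
rewrite /prob_unif -/G ler_pdivlMr ?ltr0n ?expn_gt0 //.
have : (2 ^ m)%:R <= G%:R + B%:R :> R by rewrite -natrD ler_nat.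
lra.
Qed.
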